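(* Let $\alpha,\beta$ be sets, $z\in\beta$, $\mathit{seq}:\beta\times\alpha\to\beta$, $\mathit{comb}:\beta\times\beta\to\beta$. Calls $\mathrm{treeAggregate}(z,\mathit{seq},\mathit{comb},\mathit{rdd})$ have deterministic outcomes if and only if calls $\mathrm{aggregate}(z,\mathit{seq},\mathit{comb},\mathit{rdd})$ have deterministic outcomes.
   Context: Lists are finite; $\mathbin{+\!\!+}$ is concatenation. $\mathrm{foldl}(f,b,[\,])=b$, $\mathrm{foldl}(f,b,[x_1,\dots,x_n])=f(\cdots f(f(b,x_1),x_2)\cdots,x_n)$. An RDD is a list of lists. A partitioning is a function $P$ sending each list $L$ over $\alpha$ to a nonempty RDD obtained by splitting $L$ into consecutive (possibly empty) pieces $p_1,\dots,p_n$ ($n\ge1$) with $p_1\mathbin{+\!\!+}\cdots\mathbin{+\!\!+}p_n=L$ and then arbitrarily permuting $[p_1,\dots,p_n]$. $\mathrm{aggregate}_{\mathrm{det}}(z,\mathit{seq},\mathit{comb},[q_1,\dots,q_m])=\mathrm{foldl}(\mathit{comb},z,[\mathrm{foldl}(\mathit{seq},z,q_1),\dots,\mathrm{foldl}(\mathit{seq},z,q_m)])$; calls to $\mathrm{aggregate}$ have deterministic outcomes if $\mathrm{aggregate}_{\mathrm{det}}(z,\mathit{seq},\mathit{comb},P(L))=\mathrm{foldl}(\mathit{seq},z,L)$ for all $L$ and all partitionings $P$. An instantiation of $\mathrm{apply}$ is any deterministic procedure which, given $\mathit{comb}$ and a nonempty list $[r_1,\dots,r_m]$, returns the single value obtained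 by repeatedly choosing two adjacent elements $l',r'$ of the current list and replacing them by $\mathit{comb}(l',r')$ until one element remains (equivalently, evaluating $\mathit{comb}$ along some binary tree whose leaves are $r_1,\dots,r_m$ in order). $\mathrm{treeAggregate}_{\mathrm{bt}}(\mathrm{apply},z,\mathit{seq},\mathit{comb},[q_1,\dots,q_m])=\mathrm{apply}(\mathit{comb},[\mathrm{foldl}(\mathit{seq},z,q_1),\dots,\mathrm{foldl}(\mathit{seq},z,q_m)])$. Calls $\mathrm{treeAggregate}(z,\mathit{seq},\mathit{comb},\mathit{rdd})$ have deterministic outcomes if $\mathrm{treeAggregate}_{\mathrm{bt}}(\mathrm{apply},z,\mathit{seq},\mathit{comb},P(L))=\mathrm{foldl}(\mathit{seq},z,L)$ for all lists $L$, partitionings $P$, and instantiations $\mathrm{apply}$. *)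

(* Defs.v *)
From Stdlib Require Import List Permutation.
Import ListNotations.
Set Implicit Arguments.

Definition foldl {A B : Type} (f : B -> A -> B) (b : B) (L : list A) : B :=
  fold_left f L b.

Definition is_partitioning {A : Type} (P : list A -> list (list A)) : Prop :=
  forall L : list A,
    exists ps : list (list A),
      ps <> [] /\ concat ps = L /\ Permutation ps (P L).

Definition aggregate_det {A B : Type} (z : B) (sq : B -> A -> B)
    (comb : B -> B -> B) (rdd : list (list A)) : B :=
  foldl comb z (map (fun q => foldl sq z q) rdd).

Definition aggregate_deterministic {A B : Type} (z : B) (sq : B -> A -> B)
    (comb : B -> B -> B) : Prop :=
  forall P : list A -> list (list A), is_partitioning P ->
    forall L : list A, aggregate_det z sq comb (P L) = foldl sq z L.

Inductive btree (B : Type) : Type :=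
| BLeaf : B -> btree B
| BNode : btree B -> btree B -> btree B.
Arguments BLeaf {B} _.
Arguments BNode {B} _ _.

Fixpoint leaves {B : Type} (t : btree B) : list B :=
  match t with
  | BLeaf x => [x]
  | BNode l r => leaves l ++ leaves r
  end.

Fixpoint eval_tree {B : Type} (comb : B -> B -> B) (t : btree B) : B :=
  match t with
  | BLeaf x => x
  | BNode l r => comb (eval_tree comb l) (eval_tree comb r)
  end.

Definition is_apply_instantiation {B : Type}
    (apply : (B -> B -> B) -> list B -> B) : Prop :=
  forall (comb : B -> B -> B) (rs : list B), rs <> [] ->
    exists t : btree B, leaves t = rs /\ apply comb rs = eval_tree comb t.

Definition treeAggregate_bt {A B : Type}
    (apply : (B -> B -> B) -> list B -> B) (z : B) (sq : B -> A -> B)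
    (comb : B -> B -> B) (rdd : list (list A)) : B :=
  apply comb (map (fun q => foldl sq z q) rdd).

Definition treeAggregate_deterministic {A B : Type} (z : B) (sq : B -> A -> B)
    (comb : B -> B -> B) : Prop :=
  forall (P : list A -> list (list A)) (apply : (B -> B -> B) -> list B -> B),
    is_partitioning P -> is_apply_instantiation apply ->
    forall L : list A, treeAggregate_bt apply z sq comb (P L) = foldl sq z L.

(* Main.v *)
Require Import Defs.
From Stdlib Require Import List Permutation Arith.
Import ListNotations.

Section S.
Variables (A B : Type) (z : B) (sq : B -> A -> B) (comb : B -> B -> B).
Let f := foldl sq z.

Lemma f_app : forall a b, f (a ++ b) = fold_left sq b (f a).
Proof. intros; unfold f, foldl; apply fold_left_app. Qed.

Lemma foldl_comb (H1 : forall a b, comb (f a) (f b) = f (a ++ b)) :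
  forall qs a, fold_left comb (map f qs) (f a) = f (a ++ concat qs).
Proof.
  induction qs as [|q qs IH]; intros a; simpl.
  - rewrite app_nil_r; reflexivity.
  - rewrite H1, IH, app_assoc; reflexivity.
Qed.

Lemma tree_eval (H1 : forall a b, comb (f a) (f b) = f (a ++ b)) :
  forall t qs, leaves t = map f qs -> eval_tree comb t = f (concat qs).
Proof.
  induction t as [x|l IHl r IHr]; intros qs Hq; simpl in *.
  - destruct qs as [|q [|q' qs]]; simpl in Hq; try discriminate.
    injection Hq as ->. simpl. rewrite app_nil_r; reflexivity.
  - symmetry in Hq; apply map_eq_app in Hq. destruct Hq as [q1 [q2 [-> [E1 E2]]]].
    rewrite (IHl _ (eq_sym E1)), (IHr _ (eq_sym E2)), H1, concat_app; reflexivity.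
Qed.
End S.

Definition lapply {B : Type} (z : B) (comb : B -> B -> B) (rs : list B) : B :=
  match rs with [] => z | x :: xs => fold_left comb xs x end.

Definition ltree {B : Type} (xs : list B) (t : btree B) : btree B :=
  fold_left (fun t y => BNode t (BLeaf y)) xs t.

Lemma ltree_leaves {B : Type} : forall (xs : list B) t, leaves (ltree xs t) = leaves t ++ xs.
Proof.
  induction xs as [|x xs IH]; intros t; simpl.
  - rewrite app_nil_r; reflexivity.
  - unfold ltree in *; rewrite IH; simpl; rewrite <- app_assoc; reflexivity.
Qed.

Lemma ltree_eval {B : Type} (comb : B -> B -> B) :
  forall (xs : list B) t, eval_tree comb (ltree xs t) = fold_left comb xs (eval_tree comb t).
Proof.
  induction xs as [|x xs IH]; intros t; simpl; [reflexivity|].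
  unfold ltree in *; rewrite IH; reflexivity.
Qed.

Lemma lapply_inst {B : Type} (z : B) : is_apply_instantiation (lapply z).
Proof.
  intros comb [|x xs] Hne; [congruence|].
  exists (ltree xs (BLeaf x)); split.
  - rewrite ltree_leaves; reflexivity.
  - rewrite ltree_eval; reflexivity.
Qed.

Theorem proposition1 (A B : Type) (z : B) (sq : B -> A -> B) (comb : B -> B -> B) :
  treeAggregate_deterministic z sq comb <-> aggregate_deterministic z sq comb.
Proof.
  split.
  - intros TD P HP L.
    set (P' := fun L => [] :: P L).
    assert (HP' : is_partitioning P').
    { intros L'. destruct (HP L') as [ps [Hne [Hc Hperm]]].
      exists ([] :: ps); split; [congruence|split].
      - simpl; exact Hc.
      - unfold P'; constructor; exact Hperm. }
    pose proof (TD P' (lapply z) HP' (lapply_inst z) L) as E.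
    unfold treeAggregate_bt, P' in E; simpl in E.
    exact E.
  - intros AD P apl HP Happ L.
    assert (H0 : forall a, comb z (foldl sq z a) = foldl sq z a).
    { intros a. pose proof (AD (fun L => [L]) ltac:(intros L'; exists [L']; split; [congruence|split; [apply app_nil_r|constructor; constructor]]) a) as E.
      exact E. }
    assert (H1 : forall a b, comb (foldl sq z a) (foldl sq z b) = foldl sq z (a ++ b)).
    { intros a b.
      set (n := length a).
      assert (HPn : is_partitioning (fun L : list A => [firstn n L; skipn n L])).
      { intros L'. exists [firstn n L'; skipn n L']; split; [congruence|split].
        - simpl; rewrite app_nil_r; apply firstn_skipn.
        - apply Permutation_refl. }
      pose proof (AD _ HPn (a ++ b)) as E.
      unfold aggregate_det in E; simpl in E.
      unfold n in E. rewrite firstn_app, skipn_app, Nat.sub_diag, firstn_all, skipn_all in E.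
      simpl in E. rewrite app_nil_r, H0 in E. exact E. }
    destruct (HP L) as [ps [Hne [Hc Hperm]]].
    assert (HneP : map (foldl sq z) (P L) <> []).
    { intros E. apply map_eq_nil in E. apply Permutation_length in Hperm.
      rewrite E in Hperm. destruct ps; simpl in *; congruence. }
    destruct (Happ comb _ HneP) as [t [Ht Ev]].
    unfold treeAggregate_bt. change (fun q : list A => foldl sq z q) with (foldl sq z). rewrite Ev.
    rewrite (@tree_eval _ _ z sq comb H1 t (P L) Ht).
    pose proof (AD P HP L) as E. unfold aggregate_det in E. change (fun q : list A => foldl sq z q) with (foldl sq z) in E. unfold foldl at 1 in E.
    rewrite <- E. symmetry. exact (@foldl_comb _ _ z sq comb H1 (P L) []).
Qed.
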